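(* Let $\langle L,\leq\rangle$, $\langle K,\leq\rangle$ be complete lattices, $f:L\to K$ a surjective lattice morphism, and $O:L\to L$ an operator that respects $f$, with projection $O_f:K\to K$. If $O$ and $O_f$ are monotone, then $f(\mathrm{lfp}(O))=\mathrm{lfp}(O_f)$.
   Context: A lattice morphism satisfies $f(\bigvee X)=\bigvee f(X)$ and $f(\bigwedge X)=\bigwedge f(X)$ for all $X\subseteq L$. $O$ respects $f$ if $f(x)=f(y)$ implies $f(O(x))=f(O(y))$; $O_f$ is the unique operator on $K$ with $O_f\circ f=f\circ O$. $\mathrm{lfp}$ denotes the least fixpoint. *)

(* Defs.v *)
Record complete_lattice := CompleteLattice {
  carrier :> Type;
  le : carrier -> carrier -> Prop;
  le_refl : forall x, le x x;
  le_trans : forall x y z, le x y -> le y z -> le x z;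
  le_antisym : forall x y, le x y -> le y x -> x = y;
  sup : (carrier -> Prop) -> carrier;
  sup_ub : forall (X : carrier -> Prop) x, X x -> le x (sup X);
  sup_least : forall (X : carrier -> Prop) z,
      (forall x, X x -> le x z) -> le (sup X) z;
  inf : (carrier -> Prop) -> carrier;
  inf_lb : forall (X : carrier -> Prop) x, X x -> le (inf X) x;
  inf_greatest : forall (X : carrier -> Prop) z,
      (forall x, X x -> le z x) -> le z (inf X)
}.

Arguments le {c} _ _.
Arguments sup {c} _.
Arguments inf {c} _.

Definition image {L K : complete_lattice} (f : L -> K) (X : L -> Prop) : K -> Prop :=
  fun y => exists x, X x /\ f x = y.

Definition lattice_morphism {L K : complete_lattice} (f : L -> K) : Prop :=
  forall X : L -> Prop, f (sup X) = sup (image f X) /\ f (inf X) = inf (image f X).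

Definition surjective {A B : Type} (f : A -> B) : Prop := forall y, exists x, f x = y.

Definition monotone {L : complete_lattice} (O : L -> L) : Prop :=
  forall x y, le x y -> le (O x) (O y).

Definition respects {L K : complete_lattice} (O : L -> L) (f : L -> K) : Prop :=
  forall x y, f x = f y -> f (O x) = f (O y).

Definition is_projection {L K : complete_lattice} (O : L -> L) (f : L -> K)
  (Of : K -> K) : Prop :=
  forall x, Of (f x) = f (O x).

Definition is_lfp {L : complete_lattice} (O : L -> L) (x : L) : Prop :=
  O x = x /\ forall y, O y = y -> le x y.

(* Main.v *)
Require Import Defs.

Lemma lfp_le_pre (L : complete_lattice) (O : L -> L) (a d : L) :
  monotone O -> is_lfp O a -> le (O d) d -> le a d.
Proof.
  intros Hm [Ha Hl] Hd.
  set (m := inf (fun x => le (O x) x)).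
  assert (H1 : le (O m) m).
  { apply inf_greatest. intros x Hx. eapply le_trans; [|exact Hx].
    apply Hm. apply inf_lb. exact Hx. }
  assert (H2 : le m (O m)).
  { apply inf_lb. apply Hm. exact H1. }
  assert (Hf : O m = m) by (apply le_antisym; assumption).
  eapply le_trans. apply Hl. exact Hf. apply inf_lb. exact Hd.
Qed.

Lemma morph_mono (L K : complete_lattice) (f : L -> K) :
  lattice_morphism f -> forall x y, le x y -> le (f x) (f y).
Proof.
  intros Hf x y Hxy.
  set (X := fun z => z = x \/ z = y).
  assert (Hs : sup X = y).
  { apply le_antisym. apply sup_least. intros z [->| ->]; auto. apply le_refl.
    apply sup_ub. right; reflexivity. }
  destruct (Hf X) as [H _]. rewrite Hs in H. rewrite H.
  apply sup_ub. exists x. split; [left; reflexivity|reflexivity].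
Qed.

Theorem lemmaA2 (L K : complete_lattice) (f : L -> K) (O : L -> L) (Of : K -> K) :
  lattice_morphism f -> surjective f ->
  respects O f -> is_projection O f Of ->
  monotone O -> monotone Of ->
  forall a : L, is_lfp O a -> is_lfp Of (f a).
Proof.
  intros Hf Hs Hr Hp Hm Hmf a Ha.
  split.
  - rewrite Hp. destruct Ha as [Ha _]. rewrite Ha. reflexivity.
  - intros y Hy.
    set (P := fun x => f x = y).
    set (d := sup P).
    assert (Hd : f d = y).
    { destruct (Hf P) as [H _]. unfold d. rewrite H.
      destruct (Hs y) as [x0 Hx0].
      apply le_antisym.
      - apply sup_least. intros z [x [Px <-]]. rewrite Px. apply le_refl.
      - apply sup_ub. exists x0. split; assumption. }
    assert (HO : P (O d)). { unfold P. rewrite <- Hp, Hd. exact Hy. }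
    assert (Hle : le a d).
    { apply (lfp_le_pre L O a d Hm Ha). apply sup_ub. exact HO. }
    rewrite <- Hd. apply morph_mono; assumption.
Qed.
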